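(* Let $G$ be a finite non-abelian group and $C\le G$ a subgroup such that: $C=\langle c\rangle$ is cyclic of order a power of a prime $r$; $C$ is characteristic in $G$; $C\cap Z(G)=\{1\}$; and some $a\in G$ induces by conjugation on $C$ an automorphism whose order is not a power of $r$. Let $\gamma$ be a gamma function on $G$ and suppose there is a function $\sigma:C\to C$ with $\gamma(x)=\iota\big((x^{\sigma})^{-1}\big)$ for every $x\in C$. Then either $\gamma(x)=1$ for all $x\in C$ (i.e. $C\le\ker(\gamma)$), or $\gamma(x)=\iota(x^{-1})$ for all $x\in C$, in which case $C\le\ker(\tilde\gamma)$, where $\tilde\gamma(x)=\gamma(x^{-1})\iota(x^{-1})$.
   Context: Maps act on the right, written exponentially; $\iota(g)\in\mathrm{Aut}(G)$ is $x\mapsto g^{-1}xg$. A gamma function on $G$ is a map $\gamma:G\to\mathrm{Aut}(G)$ with $\gamma(g^{\gamma(h)}h)=\gamma(g)\gamma(h)$ for all $g,h\in G$; $\ker(\gamma)=\{g:\gamma(g)=1\}$. The map $\tilde\gamma$ is again a gamma function. *)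

(* Defs.v *)
From mathcomp Require Import all_boot all_fingroup all_solvable.
Set Implicit Arguments. Unset Strict Implicit. Unset Printing Implicit Defensive.
Local Open Scope group_scope.

(* Automorphisms of G are permutations in Aut G (identity off G).
   MathComp permutations compose left-to-right ((s * t) x = t (s x)),
   matching the paper's right-action convention.  The application
   γ h g is the paper's g^{γ(h)}. *)
Definition gamma_fun (gT : finGroupType) (G : {group gT})
    (gamma : gT -> {perm gT}) : Prop :=
  {in G, forall g, gamma g \in Aut G} /\
  {in G &, forall g h, gamma (gamma h g * h) = gamma g * gamma h}.

Definition iota_aut (gT : finGroupType) (G : {group gT}) (g : gT) : {perm gT} :=
  conj_aut G g.

Definition gamma_tilde (gT : finGroupType) (G : {group gT})
    (gamma : gT -> {perm gT}) (x : gT) : {perm gT} :=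
  gamma x^-1 * iota_aut G x^-1.

(* Main.v *)
Require Import Defs.
From mathcomp Require Import all_boot all_fingroup all_solvable.

Lemma lift_pow r m j : prime r -> 0 < m -> r %| m - 1 -> r ^ j.+1 %| m ^ (r ^ j) - 1.
Proof.
move=> pr m0 rm; elim: j => [|j IH]; first by rewrite expn0 expn1 expn1.
have r1 := prime_gt1 pr.
rewrite [r ^ j.+1]expnS [r * _]mulnC expnM.
set z := m ^ (r ^ j) in IH *.
have z0 : 0 < z by rewrite expn_gt0 m0.
have -> : z ^ r - 1 = z ^ r - 1 ^ r by rewrite exp1n.
rewrite subn_exp (expnS r j.+1) mulnC dvdn_mul //.
have zr : z %% r = 1.
  have : z == 1 %[mod r].
    rewrite eqn_mod_dvd //; apply: dvdn_trans IH; exact: dvdn_exp.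
  by move/eqP=> ->; rewrite modn_small.
rewrite /dvdn.
rewrite -modn_summ.
rewrite (eq_bigr (fun _ => 1)); last first.
  by move=> i _; rewrite exp1n muln1 -modnXm zr exp1n modn_small.
by rewrite sum_nat_const card_ord muln1 modnn.
Qed.

Lemma fixed_pow r n e m : prime r -> e * m = e %[mod r ^ n] -> ~~ (r ^ n %| e) ->
  m ^ (r ^ n) = 1 %[mod r ^ n].
Proof.
move=> pr he ne.
have m0 : 0 < m.
  case: m he => // he; exfalso; move: ne; rewrite muln0 mod0n in he.
  by rewrite /dvdn -he eqxx.
have rm : r %| m - 1.
  apply: contraNT ne => nrm.
  have cop : coprime (r ^ n) (m - 1) by rewrite coprimeXl // prime_coprime.
  rewrite -(Gauss_dvdl _ cop) mulnBr muln1 -eqn_mod_dvd; first by apply/eqP.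
  by rewrite leq_pmulr.
apply/eqP; rewrite eqn_mod_dvd ?expn_gt0 ?m0 //.
apply: dvdn_trans (@lift_pow r m n pr m0 rm).
by rewrite dvdn_exp2l.
Qed.

Lemma pp_split r n k : prime r -> r ^ n %| k * k.+1 -> r ^ n %| k \/ r ^ n %| k.+1.
Proof.
move=> pr h; case: (boolP (r %| k)) => rk.
- left; have cop : coprime (r ^ n) k.+1.
    rewrite coprimeXl // prime_coprime //; apply: contraTN rk => rk1.
    apply/negP => rk'; move: rk1; rewrite -addn1 dvdn_addr // dvdn1.
    by move=> /eqP r1; move: pr; rewrite r1.
  by rewrite -(Gauss_dvdl _ cop).
- right; have cop : coprime (r ^ n) k by rewrite coprimeXl // prime_coprime.
  by rewrite -(Gauss_dvdr _ cop).
Qed.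
Arguments pp_split {r n k}.
Arguments fixed_pow {r n e m}.
Local Open Scope group_scope.

Lemma conj_eq_C (gT : finGroupType) (G C : {group gT}) u v :
  C \subset G -> C :&: 'Z(G) = 1 -> u \in C -> v \in C ->
  {in G, forall y, y ^ u = y ^ v} -> u = v.
Proof.
move=> sCG tiCZ Cu Cv H.
have Cw : u * v^-1 \in C by rewrite groupM ?groupV.
have : u * v^-1 \in C :&: 'Z(G).
  rewrite inE Cw /= /center inE (subsetP sCG _ Cw) /=.
  apply/centP=> y Gy.
  have e : y ^ (u * v^-1) = y by rewrite conjgM H // conjgK.
  by rewrite /commute [RHS]conjgC e.
by rewrite tiCZ inE => /eqP e; apply: (mulIg v^-1); rewrite e mulgV.
Qed.

Lemma aut_char_mem (gT : finGroupType) (G C : {group gT}) (al : {perm gT}) x :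
  C \char G -> al \in Aut G -> x \in C -> al x \in C.
Proof.
move=> /charP [sCG hf] Aa Cx.
have := hf _ (injm_autm Aa) (im_autm Aa).
move=> <-; rewrite -{1}(autmE Aa); apply: mem_morphim => //.
exact: (subsetP sCG).
Qed.

Lemma autJ (gT : finGroupType) (G : {group gT}) (f : {perm gT}) u v :
  f \in Aut G -> u \in G -> v \in G -> f (u ^ v) = f u ^ f v.
Proof. by move=> Af Gu Gv; have := morphJ (autm Af) Gu Gv; rewrite !autmE. Qed.

Lemma autX (gT : finGroupType) (G : {group gT}) (f : {perm gT}) u n :
  f \in Aut G -> u \in G -> f (u ^+ n) = f u ^+ n.
Proof. by move=> Af Gu; have := morphX (autm Af) n Gu; rewrite !autmE. Qed.
Arguments autJ {gT G f u v}.
Arguments autX {gT G f u} n.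
Arguments aut_char_mem {gT G C al x}.

Theorem mainTheorem11 (gT : finGroupType) (G C : {group gT}) (c a : gT)
    (r : nat) (gamma : gT -> {perm gT}) (sigma : gT -> gT) :
  ~~ abelian G ->
  prime r ->
  C :=: <[c]> ->
  r.-group C ->
  C \char G ->
  C :&: 'Z(G) = 1 ->
  a \in G ->
  ~~ r.-elt (conj_aut C a) ->
  gamma_fun G gamma ->
  {in C, forall x, sigma x \in C} ->
  {in C, forall x, gamma x = iota_aut G (sigma x)^-1} ->
  {in C, forall x, gamma x = 1} \/
  ({in C, forall x, gamma x = iota_aut G x^-1} /\
   {in C, forall x, gamma_tilde G gamma x = 1}).
Proof.
move=> _ pr defC rC chC tiCZ aG nr [gAut gM] sC gC.
have sCG := char_sub chC.
have nCG := char_norm chC.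
have cCC : abelian C by rewrite defC cycle_abelian.
have inG : {in C, forall x, x \in G} by apply/subsetP.
have inN : {in G, forall x, x \in 'N(G)} by apply/subsetP; apply: normG.
have Cc : c \in C by rewrite defC cycle_id.
pose tau x := (sigma x)^-1.
have tauC : {in C, forall x, tau x \in C} by move=> x Cx; rewrite groupV sC.
have gT' : {in C, forall x, gamma x = conj_aut G (tau x)} by exact: gC.
have cinj : {in C &, forall u v, conj_aut G u = conj_aut G v -> u = v}.
  move=> u v Cu Cv e; apply: (@conj_eq_C _ G C u v sCG tiCZ) => // y Gy.
  by rewrite -(norm_conj_autE (inN _ (inG _ Cu)) Gy) e norm_conj_autE // inN // inG.
have tauM : {in C &, forall x y, tau (x * y) = tau x * tau y}.
  move=> x y Cx Cy; apply: cinj; first exact: tauC (groupM Cx Cy).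
    by rewrite groupM ?tauC.
  rewrite conj_aut_morphM ?inN ?inG ?tauC // -!gT' ?groupM //.
  have -> : x * y = gamma y x * y.
    rewrite gT' // norm_conj_autE ?inN ?inG ?tauC //.
    by rewrite /conjg -mulgA (centsP cCC _ Cx _ (tauC _ Cy)) -mulgA mulKg.
  by rewrite gM ?inG.
have tau1 : tau 1 = 1.
  have := tauM 1 1 (group1 _) (group1 _); rewrite mulg1 => e.
  by apply: (mulgI (tau 1)); rewrite mulg1 -e.
have tauX : {in C, forall x i, tau (x ^+ i) = tau x ^+ i}.
  move=> x Cx; elim=> [|i IH]; first by rewrite !expg0.
  by rewrite !expgS tauM ?groupX // IH.
have [k tck] : exists k, tau c = c ^+ k by apply/cycleP; rewrite -defC tauC.
have tauk : {in C, forall x, tau x = x ^+ k}.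
  move=> x; rewrite defC => /cycleP [i ->].
  by rewrite tauX // tck -!expgM mulnC.
have Nc : a \in 'N(C) := subsetP nCG _ aG.
have gG : a^-1 \in G by rewrite groupV.
have Aal : gamma a^-1 \in Aut G := gAut _ gG.
have Aali : (gamma a^-1)^-1 \in Aut G by rewrite groupV.
set t := c ^+ k.
have Ct : t \in C by rewrite groupX.
set w := t^-1 * (t * c) ^ a.
have Cw : w \in C by rewrite groupM ?groupV // memJ_norm // groupM.
set x := (gamma a^-1)^-1 w.
have Cx : x \in C by exact: aut_char_mem chC Aali Cw.
have alx : gamma a^-1 x = w by rewrite /x permKV.
have e1 : gamma x * gamma a^-1 = gamma a^-1 * gamma c.
  rewrite -(gM _ _ (inG _ Cx) gG) -(gM _ _ gG (inG _ Cc)); congr gamma.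
  rewrite alx gT' // tck (norm_conj_autE (inN _ (inG _ Ct)) gG).
  by rewrite /w !conjgE !mulgA mulgK.
have e2 : gamma a^-1 (tau x) = t.
  apply: (@conj_eq_C _ G C _ _ sCG tiCZ); [exact: aut_char_mem chC Aal (tauC _ Cx) | done |].
  move=> z Gz.
  have := congr1 (fun p : {perm gT} => p ((gamma a^-1)^-1 z)) e1.
  have Gz' : (gamma a^-1)^-1 z \in G.
    exact: (@Aut_closed _ G _ Aali _ Gz).
  rewrite !permM permKV (gT' _ Cx) (gT' _ Cc) tck.
  rewrite (norm_conj_autE (inN _ (inG _ (tauC _ Cx))) Gz') (norm_conj_autE (inN _ (inG _ Ct)) Gz).
  by rewrite (autJ Aal Gz' (inG _ (tauC _ Cx))) permKV.
have e3 : w ^+ k = t.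
  by rewrite -alx -(autX k Aal (inG _ Cx)) -(tauk _ Cx) e2.
have e4 : (c ^+ (k.+1 * k)) ^ a = c ^+ (k.+1 * k).
  have Ctc : (t * c) ^ a \in C by rewrite memJ_norm // groupM.
  move: e3; rewrite /w expgMn; last by apply: (centsP cCC); rewrite ?groupV.
  rewrite expgVn => h.
  have h2 := congr1 (mulg (t ^+ k)) h; rewrite /= mulKVg in h2.
  rewrite -conjXg /t -expgSr -!expgM -expgD in h2.
  by rewrite h2 mulSn addnC.
have [n oc] : exists n, #[c] = (r ^ n)%N.
  have : r.-nat #[c] by move: rC; rewrite /pgroup defC.
  by case/p_natP=> n ->; exists n.
have oxc : {in C, forall y, #[y] %| #[c]}.
  by move=> y Cy; move: (order_dvdG Cy); rewrite defC.
have [m cm] : exists m, c ^ a = c ^+ m by apply/cycleP; rewrite -defC memJ_norm.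
have hem : (k.+1 * k) * m = (k.+1 * k) %[mod #[c]].
  by apply/eqP; rewrite -eq_expg_mod_order mulnC expgM -cm -conjXg e4.
case: (boolP (#[c] %| k.+1 * k)) => de.
  rewrite oc mulnC in de; case: (pp_split pr de) => dk; rewrite -oc in dk.
    left => y Cy; rewrite gT' // tauk //.
    have -> : y ^+ k = 1 by apply/eqP; rewrite -order_dvdn (dvdn_trans (oxc _ Cy)).
    exact: morph1.
  have hk : {in C, forall y, y ^+ k = y^-1}.
    move=> y Cy; have h : y ^+ k * y = 1.
      by rewrite -expgSr; apply/eqP; rewrite -order_dvdn (dvdn_trans (oxc _ Cy)).
    by rewrite -(mulgK y (y ^+ k)) h mul1g.
  right; split => y Cy.
    by rewrite gT' // tauk // hk.
  rewrite /gamma_tilde /iota_aut gT' ?groupV // tauk ?groupV // hk ?groupV // invgK.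
  by rewrite -conj_aut_morphM ?inN ?inG ?groupV // mulgV morph1.
exfalso; apply: (negP nr).
rewrite oc in hem de.
have mp := fixed_pow pr hem de.
have cj : forall j, c ^ (a ^+ j) = c ^+ (m ^ j).
  elim=> [|j IH]; first by rewrite expg0 conjg1 expn0 expg1.
  by rewrite expgSr conjgM IH conjXg cm -expgM expnS.
apply: (@pnat_dvd _ (r ^ n)%N); last by rewrite pnatX pnat_id.
rewrite order_dvdn -morphX //; apply/eqP; apply: mker.
rewrite ker_conj_aut defC cent_cycle cent1E.
have h : c ^ (a ^+ (r ^ n)) = c.
  by rewrite cj -expg_mod_order oc mp -oc expg_mod_order expg1.
by rewrite [c * _]conjgC h.
Qed.
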